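(* Let $S:=T_1T_2\cdots T_{N-1}$. Let $i,k$ be integers with $k\ge0$, $i\le N-1$ and $i-k>1$. Then $$(T_{i-k}T_{i-k+1}\cdots T_i)(S\,T_{N-1}T_{N-2}\cdots T_i)=(S\,T_{N-1}T_{N-2}\cdots T_{i+1})(T_{i-k-1}T_{i-k}\cdots T_i)$$ in $\mathcal H_N(s)$ (where $T_{N-1}\cdots T_{i+1}$ is the empty product when $i=N-1$).
   Context: $N\ge2$, $s$ an indeterminate. $\mathcal H_N(s)$ is the algebra generated by $T_1,\dots,T_{N-1}$ with relations $(T_i+1)(T_i-s)=0$, $T_iT_{i+1}T_i=T_{i+1}T_iT_{i+1}$, $T_iT_j=T_jT_i$ for $|i-j|>1$. *)

(* Defs.v *)
From mathcomp Require Import all_boot all_order all_algebra.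
Set Implicit Arguments. Unset Strict Implicit. Unset Printing Implicit Defensive.
Import GRing.Theory.
Local Open Scope ring_scope.

Definition ascprod (A : ringType) (T : nat -> A) (a b : nat) : A :=
  \prod_(a <= j < b.+1) T j.

Definition descprod (A : ringType) (T : nat -> A) (b a : nat) : A :=
  \prod_(j <- rev (index_iota a b.+1)) T j.

Definition hecke_rels (R : comRingType) (A : algType R) (N : nat) (s : R)
  (T : nat -> A) : Prop :=
  [/\ (forall i, (1 <= i <= N.-1)%N -> (T i + 1) * (T i - s%:A) = 0),
      (forall i, (1 <= i)%N -> (i.+1 <= N.-1)%N ->
          T i * T i.+1 * T i = T i.+1 * T i * T i.+1) &
      (forall i j, (1 <= i <= N.-1)%N -> (1 <= j <= N.-1)%N ->
          (i.+1 < j)%N || (j.+1 < i)%N -> T i * T j = T j * T i)].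

(* Main.v *)
Require Import Defs.
From mathcomp Require Import all_boot all_order all_algebra.
From mathcomp Require Import zify.
Import GRing.Theory.
Local Open Scope ring_scope.

Lemma asc_recr (A : ringType) (T : nat -> A) a b :
  (a <= b.+1)%N -> ascprod T a b.+1 = ascprod T a b * T b.+1.
Proof. by move=> h; rewrite /ascprod big_nat_recr. Qed.

Lemma asc_empty (A : ringType) (T : nat -> A) a b :
  (b < a)%N -> ascprod T a b = 1.
Proof. by move=> h; rewrite /ascprod big_geq. Qed.

Lemma desc_recl (A : ringType) (T : nat -> A) a b :
  (a <= b)%N -> descprod T b a = descprod T b a.+1 * T a.
Proof.
move=> h; rewrite /descprod /index_iota.
have -> : (b.+1 - a = (b.+1 - a.+1).+1)%N by rewrite subSS subSn.
by rewrite /= rev_cons big_rcons.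
Qed.

Lemma comm_seq2 (A : ringType) (T : nat -> A) (s t : seq nat) :
  (forall x y, x \in s -> y \in t -> T x * T y = T y * T x) ->
  \prod_(x <- s) T x * \prod_(y <- t) T y = \prod_(y <- t) T y * \prod_(x <- s) T x.
Proof.
elim: s => [|x s IH] H; first by rewrite big_nil mul1r mulr1.
rewrite big_cons -mulrA IH; last by move=> u v hu hv; apply: H => //; rewrite inE hu orbT.
rewrite !mulrA; congr (_ * _).
have: GRing.comm (T x) (\prod_(y <- t | y \in t) T y).
  by apply: commr_prod => y hy; apply: H => //; rewrite inE eqxx.
by rewrite -big_seq => ->.
Qed.

Section S.
Variables (A : ringType) (T : nat -> A) (n : nat).
Hypothesis Hb : forall m, (1 <= m)%N -> (m.+1 <= n)%N ->
  T m * T m.+1 * T m = T m.+1 * T m * T m.+1.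
Hypothesis Hc : forall i j, (1 <= i <= n)%N -> (1 <= j <= n)%N ->
  (i.+1 < j)%N || (j.+1 < i)%N -> T i * T j = T j * T i.

Lemma comm1 x a b : (1 <= x <= n)%N -> (1 <= a)%N -> (b <= n)%N ->
  (forall y, (a <= y <= b)%N -> (x.+1 < y)%N || (y.+1 < x)%N) ->
  T x * ascprod T a b = ascprod T a b * T x.
Proof.
move=> hx ha hb H.
have := @comm_seq2 A T [:: x] (index_iota a b.+1).
rewrite big_seq1 /ascprod => ->//.
move=> u y; rewrite inE mem_index_iota => /eqP -> hy.
apply: Hc => //. apply/andP; split; lia. by apply: H; lia.
Qed.

Lemma shift1 m a b : (a.+1 <= m)%N -> (m <= b)%N -> (1 <= a)%N -> (b <= n)%N ->
  T m * ascprod T a b = ascprod T a b * T m.-1.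
Proof.
move=> h1 h2 ha hb; elim: b h2 hb => [|b IH] h2 hb; first lia.
case: (ltngtP m b.+1) => hm; last first.
- subst m; rewrite asc_recr; last lia.
  have hm : (b = b.-1.+1)%N by lia.
  have e : ascprod T a b = ascprod T a b.-1 * T b.
    by rewrite {1}hm asc_recr -?hm //; lia.
  rewrite e /= mulrA -[_ * _ * T b]mulrA.
  rewrite !mulrA comm1; try lia.
  rewrite -!mulrA; congr (_ * _).
  rewrite !mulrA [RHS]Hb //; lia.
- by lia.
- rewrite asc_recr; last lia.
  rewrite mulrA IH; try lia.
  rewrite -!mulrA; congr (_ * _).
  apply: Hc; try (apply/andP; split); lia.
Qed.

Lemma shiftS a b : (2 <= a)%N -> (b <= n)%N ->
  ascprod T a b * ascprod T 1 n = ascprod T 1 n * ascprod T a.-1 b.-1.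
Proof.
move=> ha; elim: b => [|b IH] hb.
  by rewrite (@asc_empty _ T a) ?(@asc_empty _ T a.-1) ?mulr1 ?mul1r //; lia.
case: (ltnP b.+1 a) => hab.
  by rewrite (@asc_empty _ T a) ?(@asc_empty _ T a.-1) ?mulr1 ?mul1r //; lia.
rewrite asc_recr; last lia.
rewrite -mulrA shift1; try lia.
rewrite mulrA IH; last lia.
rewrite -mulrA /=; congr (_ * _).
have hb' : (b = b.-1.+1)%N by lia.
  by rewrite [in RHS]hb' asc_recr -?hb' //; lia.
Qed.

End S.

Theorem lemma2p3 (R : comRingType) (A : algType R) (N : nat) (s : R)
  (T : nat -> A) (i k : nat) :
  (2 <= N)%N -> hecke_rels N s T ->
  (i <= N.-1)%N -> (k.+1 < i)%N ->
  ascprod T (i - k) i * (ascprod T 1 N.-1 * descprod T N.-1 i) =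
  (ascprod T 1 N.-1 * descprod T N.-1 i.+1) * ascprod T (i - k).-1 i.
Proof.
move=> hN [_ Hb Hc] hi hk.
set n := N.-1 in Hb Hc hi *.
rewrite mulrA shiftS //; try lia.
rewrite desc_recl // -!mulrA; congr (_ * _).
rewrite mulrA.
have := @comm_seq2 A T (index_iota (i - k).-1 (i.-1).+1) (rev (index_iota i.+1 n.+1)).
rewrite /ascprod /descprod => ->; last first.
  move=> x y; rewrite mem_rev !mem_index_iota => hx hy.
  apply: Hc; lia.
rewrite -mulrA; congr (_ * _).
have hi' : (i = i.-1.+1)%N by lia.
rewrite -[\prod_(_ <= _ < i.-1.+1) _]/(ascprod T _ i.-1).
rewrite -[\prod_(_ <= _ < i.+1) _]/(ascprod T _ i).
rewrite [in RHS]hi' asc_recr -?hi' //; lia.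
Qed.
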